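(* For $\epsilon>0$ and $\rho\ge0$ let $\mathbf G_{\epsilon\rho}(s):=\mathbf C(sI-\mathbf A_{\epsilon\rho})^{-1}\mathbf B$. Then for every fixed $s\in\mathbb C\setminus\{-m_\rho,-\mu_\rho\}$, $\lim_{\epsilon\to0}\mathbf G_{\epsilon\rho}(s)=\mathbf H_\rho(s)$, where $$\mathbf H_\rho(s):=\begin{bmatrix}\bar\Pi_{1u}&0\\\Pi_{2u}&\mu I\end{bmatrix}\begin{bmatrix}g_{m\rho}(s)I&0\\0&g_{\mu\rho}(s)I\end{bmatrix}\begin{bmatrix}-\bar\Pi_{1u}^\top&-\frac1\mu\Pi_{2u}^\top\\0&I\end{bmatrix},$$ with $g_{m\rho}(s):=(s+m_\rho)^{-1}$ and $g_{\mu\rho}(s):=(s+\mu_\rho)^{-1}$.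
   Context: Let $A\in\mathbb R^{n\times n}$ be Hurwitz, $B\in\mathbb R^{n\times p}$, and for $i=1,2$ let $C_i\in\mathbb R^{r_i\times n}$. Let $\Pi_{iu}:=-C_iA^{-1}B$ and $\bar\Pi_{1u}:=\begin{bmatrix}I\\\Pi_{1u}\end{bmatrix}$. Let $m>0$, $\mu>0$, $\rho\ge0$, $m_\rho:=m-\rho$ and $\mu_\rho:=\mu-\rho$. Define $$\mathbf A_\epsilon:=\begin{bmatrix}\frac1\epsilon A&\frac1\epsilon B&0\\0&-mI&0\\0&0&-\mu I\end{bmatrix},\qquad \mathbf A_{\epsilon\rho}:=\mathbf A_\epsilon+\rho I,$$ $$\mathbf B=\begin{bmatrix}0&0&0\\-I&-\Pi_{1u}^\top&-\frac1\mu\Pi_{2u}^\top\\0&0&I\end{bmatrix},\qquad \mathbf C=\begin{bmatrix}0&I&0\\C_1&0&0\\C_2&0&\mu I\end{bmatrix},$$ where the diagonal blocks of $\mathbf A_\epsilon$ have sizes $n,p,r_2$, and the identity blocks of $\mathbf B$ and $\mathbf C$ have compatible sizes. *)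

(* Defs.v *)
From HB Require Import structures.
From mathcomp Require Import all_boot all_order all_algebra.
From mathcomp Require Import all_classical all_reals all_analysis.
From mathcomp Require Import complex.
Set Implicit Arguments. Unset Strict Implicit. Unset Printing Implicit Defensive.
Import Order.TTheory GRing.Theory Num.Theory.
Local Open Scope ring_scope.
Local Open Scope complex_scope.
Import numFieldTopology.Exports numFieldNormedType.Exports.

(* Equip R[i] with its standard normed (hence topological) structure: the
   norm |z| of the numClosedField R[i], regarded as a normed module over
   itself.  Matrices over R[i] then carry the induced (entrywise/product)
   topology from MathComp-Analysis. *)
HB.instance Definition _ (R : realType) := NormedModule.copy R[i] (R[i])^o.

Section Defs.
Variable R : realType.
Local Notation C := (R[i]).

Definition cmx m k (M : 'M[R]_(m, k)) : 'M[C]_(m, k) := map_mx (fun x => x%:C) M.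

Definition hurwitz n (A : 'M[R]_n) : Prop :=
  forall l : C, eigenvalue (cmx A) l -> Re l < 0.

Variables (n p r1 r2 : nat) (A : 'M[R]_n) (B : 'M[R]_(n, p))
  (C1 : 'M[R]_(r1, n)) (C2 : 'M[R]_(r2, n)) (m mu : R).

Definition Pi_u r (Ci : 'M[R]_(r, n)) : 'M[R]_(r, p) := - (Ci *m invmx A *m B).
Definition Pi1u := Pi_u C1.
Definition Pi2u := Pi_u C2.
Definition Pibar1u : 'M[R]_(p + r1, p) := col_mx 1%:M Pi1u.

Definition Aeps (eps : R) : 'M[R]_((n + p) + r2) :=
  block_mx (block_mx (eps^-1 *: A) (eps^-1 *: B) 0 (- m%:M)) 0 0 (- mu%:M).
Definition Aepsrho (eps rho : R) : 'M[R]_((n + p) + r2) := Aeps eps + rho%:M.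

Definition Bm : 'M[R]_((n + p) + r2, (p + r1) + r2) :=
  block_mx (col_mx 0 (row_mx (- 1%:M) (- Pi1u^T)))
           (col_mx 0 (- (mu^-1 *: Pi2u^T)))
           0 1%:M.

Definition Cm : 'M[R]_((p + r1) + r2, (n + p) + r2) :=
  block_mx (col_mx (row_mx 0 1%:M) (row_mx C1 0)) 0
           (row_mx C2 0) (mu%:M).

Definition Gepsrho (eps rho : R) (s : C) : 'M[C]_((p + r1) + r2) :=
  cmx Cm *m invmx (s%:M - cmx (Aepsrho eps rho)) *m cmx Bm.

Definition g_ (a rho : R) (s : C) : C := (s + (a - rho)%:C)^-1.

Definition Hrho (rho : R) (s : C) : 'M[C]_((p + r1) + r2) :=
  block_mx (cmx Pibar1u) 0 (cmx Pi2u) ((mu%:C)%:M)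
  *m block_mx ((g_ m rho s)%:M) 0 0 ((g_ mu rho s)%:M)
  *m block_mx (- cmx Pibar1u^T) (- ((mu^-1)%:C *: cmx Pi2u^T)) 0 1%:M.

End Defs.

(* Main.v *)
Require Import Defs.
From HB Require Import structures.
From mathcomp Require Import all_boot all_order all_algebra.
From mathcomp Require Import all_classical all_reals all_analysis.
From mathcomp Require Import complex.
Import Order.TTheory GRing.Theory Num.Theory.
Import numFieldTopology.Exports numFieldNormedType.Exports.
Local Open Scope ring_scope.
Local Open Scope complex_scope.
Local Open Scope classical_set_scope.

From mathcomp Require Import perm.
Set Implicit Arguments. Unset Strict Implicit.
Section Lib.
Variable R : realType.
Local Notation C := (R[i]).

Lemma mxcvgP {T} (F : set_system T) {FF : Filter F} a b (f : T -> 'M[C]_(a,b)) (M : 'M[C]_(a,b)) :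
  (forall i j, (fun x => f x i j) @ F --> M i j) -> f @ F --> M.
Proof.
move=> h; apply/cvg_mx_entourageP => A entA.
change (\forall x \near F, forall i j, (M i j, f x i j) \in A).
apply: filter_forall => i; apply: filter_forall => j.
have H := proj1 (@cvg_entourageP _ _ (fmap_filter _ FF) _) (h i j) A entA.
near=> x; rewrite inE; near: x; exact: H.
Unshelve. all: by end_near.
Qed.

Lemma normC_real (x : R) : `|x%:C| = `|x|%:C.
Proof. by rewrite normc_def /= expr0n /= addr0 sqrtr_sqr. Qed.

Lemma cvg_realC (x : R) : (fun y : R => y%:C) @ x --> x%:C.
Proof.
apply/cvgrPdist_lt => e e0.
have /complex_realP [k ek] := gtr0_real e0.
move: e0; rewrite ek ltcR => e0'.
have H := @cvgr_dist_lt _ R^o _ (nbhs x) _ id x cvg_id k e0'.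
near=> y; rewrite -rmorphB normC_real ltcR; near: y; exact: H.
Unshelve. all: by end_near.
Qed.

Section Cvg.
Context {T : Type} (F : set_system T) {FF : Filter F}.

Lemma cvg_near_eqC (f g : T -> C) (l : C) :
  (\forall x \near F, f x = g x) -> g @ F --> l -> f @ F --> l.
Proof.
move=> E hg U /hg gU.
change (\forall x \near F, U (f x)).
change (\forall x \near F, U (g x)) in gU.
exact: (@filterS2 T F FF (fun x => f x = g x) (fun x => U (g x)) (fun x => U (f x)) (fun x e u => eq_ind_r U u e) E gU).
Qed.

Lemma cvg_sumC (I : Type) (r : seq I) (u : I -> T -> C) (l : I -> C) :
  (forall k, u k @ F --> l k) ->
  (fun x => \sum_(k <- r) u k x) @ F --> \sum_(k <- r) l k.
Proof.
move=> h; elim: r => [|k r IH].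
  rewrite big_nil.
  have -> : (fun x => \sum_(k <- [::]) u k x) = fun _ => 0.
    by apply/funext => x; rewrite big_nil.
  exact: cvg_cst.
rewrite big_cons.
have -> : (fun x => \sum_(j <- k :: r) u j x) = fun x => u k x + \sum_(j <- r) u j x.
  by apply/funext => x; rewrite big_cons.
exact: (cvgD (h k) IH).
Qed.

Lemma cvg_prodC (I : Type) (r : seq I) (u : I -> T -> C) (l : I -> C) :
  (forall k, u k @ F --> l k) ->
  (fun x => \prod_(k <- r) u k x) @ F --> \prod_(k <- r) l k.
Proof.
move=> h; elim: r => [|k r IH].
  rewrite big_nil.
  have -> : (fun x => \prod_(k <- [::]) u k x) = fun _ => 1.
    by apply/funext => x; rewrite big_nil.
  exact: cvg_cst.
rewrite big_cons.
have -> : (fun x => \prod_(j <- k :: r) u j x) = fun x => u k x * \prod_(j <- r) u j x.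
  by apply/funext => x; rewrite big_cons.
exact: (cvgM (h k) IH).
Qed.

Definition mxc a b (f : T -> 'M[C]_(a,b)) (M : 'M[C]_(a,b)) :=
  forall i j, (fun x => f x i j) @ F --> M i j.
Arguments mxc {a b}.

Lemma mxc_cst a b (M : 'M[C]_(a,b)) : mxc (fun _ => M) M.
Proof. move=> i j; exact: cvg_cst. Qed.

Lemma mxc_add a b (f g : T -> 'M[C]_(a,b)) M N :
  mxc f M -> mxc g N -> mxc (fun x => f x + g x) (M + N).
Proof.
move=> hf hg i j; rewrite mxE.
have -> : (fun x => (f x + g x) i j) = fun x => f x i j + g x i j.
  by apply/funext => x; rewrite mxE.
exact: (cvgD (hf i j) (hg i j)).
Qed.

Lemma mxc_opp a b (f : T -> 'M[C]_(a,b)) M :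
  mxc f M -> mxc (fun x => - f x) (- M).
Proof.
move=> hf i j; rewrite mxE.
have -> : (fun x => (- f x) i j) = fun x => - f x i j.
  by apply/funext => x; rewrite mxE.
exact: (cvgN (hf i j)).
Qed.

Lemma mxc_scale a b (s : T -> C) (k : C) (f : T -> 'M[C]_(a,b)) M :
  s @ F --> k -> mxc f M -> mxc (fun x => s x *: f x) (k *: M).
Proof.
move=> hs hf i j; rewrite mxE.
have -> : (fun x => (s x *: f x) i j) = fun x => s x * f x i j.
  by apply/funext => x; rewrite mxE.
exact: (cvgM hs (hf i j)).
Qed.

Lemma mxc_scalarf a (s : T -> C) (k : C) :
  s @ F --> k -> mxc (fun x => ((s x)%:M : 'M[C]_a)) (k%:M).
Proof.
move=> hs i j; rewrite mxE.
have -> : (fun x => ((s x)%:M : 'M[C]_a) i j) = fun x => s x *+ (i == j).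
  by apply/funext => x; rewrite mxE.
case: (i == j); [exact: hs | exact: cvg_cst].
Qed.

Lemma mxc_mul a b c (f : T -> 'M[C]_(a,b)) (g : T -> 'M[C]_(b,c)) M N :
  mxc f M -> mxc g N -> mxc (fun x => f x *m g x) (M *m N).
Proof.
move=> hf hg i j; rewrite mxE.
have -> : (fun x => (f x *m g x) i j) = fun x => \sum_k (f x i k * g x k j).
  by apply/funext => x; rewrite mxE.
apply: (@cvg_sumC _ (index_enum _) (fun k x => f x i k * g x k j) (fun k => M i k * N k j)) => k.
exact: (cvgM (hf i k) (hg k j)).
Qed.

Lemma mxc_row a b1 b2 (f : T -> 'M[C]_(a,b1)) (g : T -> 'M[C]_(a,b2)) M N :
  mxc f M -> mxc g N -> mxc (fun x => row_mx (f x) (g x)) (row_mx M N).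
Proof.
move=> hf hg i j; rewrite -(splitK j); case: (fintype.split j) => k /=.
  rewrite row_mxEl.
  have -> : (fun x => row_mx (f x) (g x) i (lshift b2 k)) = fun x => f x i k.
    by apply/funext => x; rewrite row_mxEl.
  exact: hf.
rewrite row_mxEr.
have -> : (fun x => row_mx (f x) (g x) i (rshift b1 k)) = fun x => g x i k.
  by apply/funext => x; rewrite row_mxEr.
exact: hg.
Qed.

Lemma mxc_col a1 a2 b (f : T -> 'M[C]_(a1,b)) (g : T -> 'M[C]_(a2,b)) M N :
  mxc f M -> mxc g N -> mxc (fun x => col_mx (f x) (g x)) (col_mx M N).
Proof.
move=> hf hg i j; rewrite -(splitK i); case: (fintype.split i) => k /=.
  rewrite col_mxEu.
  have -> : (fun x => col_mx (f x) (g x) (lshift a2 k) j) = fun x => f x k j.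
    by apply/funext => x; rewrite col_mxEu.
  exact: hf.
rewrite col_mxEd.
have -> : (fun x => col_mx (f x) (g x) (rshift a1 k) j) = fun x => g x k j.
  by apply/funext => x; rewrite col_mxEd.
exact: hg.
Qed.

Lemma mxc_block a1 a2 b1 b2 (f1 : T -> 'M[C]_(a1,b1)) (f2 : T -> 'M[C]_(a1,b2))
  (f3 : T -> 'M[C]_(a2,b1)) (f4 : T -> 'M[C]_(a2,b2)) M1 M2 M3 M4 :
  mxc f1 M1 -> mxc f2 M2 -> mxc f3 M3 -> mxc f4 M4 ->
  mxc (fun x => block_mx (f1 x) (f2 x) (f3 x) (f4 x)) (block_mx M1 M2 M3 M4).
Proof.
move=> h1 h2 h3 h4.
exact: (mxc_col (mxc_row h1 h2) (mxc_row h3 h4)).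
Qed.

Lemma cvg_det a (f : T -> 'M[C]_a) M :
  mxc f M -> (fun x => \det (f x)) @ F --> \det M.
Proof.
move=> hf.
change ((fun x => \sum_(s : perm_of 'I_a) ((-1) ^+ s * \prod_i f x i (s i))) @ F --> \sum_(s : perm_of 'I_a) ((-1) ^+ s * \prod_i M i (s i))).
apply: (@cvg_sumC _ (index_enum _) (fun (s : perm_of 'I_a) x => (-1) ^+ s * \prod_i f x i (s i)) (fun (s : perm_of 'I_a) => (-1) ^+ s * \prod_i M i (s i))) => s.
apply: (cvgM (cvg_cst _)).
apply: (@cvg_prodC _ (index_enum _) (fun i x => f x i (s i)) (fun i => M i (s i))) => i.
exact: hf.
Qed.

Lemma mxc_adj a (f : T -> 'M[C]_a) M :
  mxc f M -> mxc (fun x => \adj (f x)) (\adj M).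
Proof.
move=> hf i j; rewrite mxE.
have -> : (fun x => (\adj (f x)) i j) = fun x => cofactor (f x) j i.
  by apply/funext => x; rewrite mxE.
rewrite /cofactor; apply: (cvgM (cvg_cst _)).
apply: (@cvg_det _ (fun x => row' j (col' i (f x)))) => k l.
rewrite !mxE.
have -> : (fun x => (row' j (col' i (f x))) k l) = fun x => f x (lift j k) (lift i l).
  by apply/funext => x; rewrite !mxE.
exact: hf.
Qed.

Lemma mxc_inv a (f : T -> 'M[C]_a) M :
  M \in unitmx -> mxc f M -> mxc (fun x => invmx (f x)) (invmx M).
Proof.
move=> uM hf.
have hd := cvg_det hf.
have dM : \det M != 0 by move: uM; rewrite unitmxE unitfE.
have ev := @cvgr_neq0 _ _ _ F FF _ _ hd dM.
move=> i j.
have -> : invmx M i j = (\det M)^-1 * \adj M i j.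
  by rewrite /invmx unitmxE unitfE dM mxE.
apply: (@cvg_near_eqC _ (fun x => (\det (f x))^-1 * \adj (f x) i j)).
  have E : forall x, \det (f x) != 0 -> invmx (f x) i j = (\det (f x))^-1 * \adj (f x) i j.
    by move=> x hx; rewrite /invmx unitmxE unitfE hx mxE.
  exact: (@filterS _ F FF _ _ E ev).
have ha : mxc (fun x => \adj (f x)) (\adj M) := mxc_adj hf.
exact (cvgM (cvgV dM hd) (ha i j)).
Qed.

End Cvg.
End Lib.

Section Cmx.
Variable R : realType.
Local Notation C := (R[i]).
Implicit Types a b c d : nat.

Lemma cmxE a b (M : 'M[R]_(a,b)) i j : cmx M i j = (M i j)%:C.
Proof. by rewrite /cmx mxE. Qed.

Lemma cmx_add a b (M N : 'M[R]_(a,b)) : cmx (M + N) = cmx M + cmx N.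
Proof. by apply/matrixP => i j; rewrite !(cmxE, mxE) rmorphD. Qed.

Lemma cmx_opp a b (M : 'M[R]_(a,b)) : cmx (- M) = - cmx M.
Proof. by apply/matrixP => i j; rewrite !(cmxE, mxE) rmorphN. Qed.

Lemma cmx0 a b : cmx (0 : 'M[R]_(a,b)) = 0.
Proof. by apply/matrixP => i j; rewrite !(cmxE, mxE). Qed.

Lemma cmx_scale a b (k : R) (M : 'M[R]_(a,b)) : cmx (k *: M) = k%:C *: cmx M.
Proof. by apply/matrixP => i j; rewrite !(cmxE, mxE) rmorphM. Qed.

Lemma cmx_scalar a (k : R) : cmx (k%:M : 'M[R]_a) = (k%:C)%:M.
Proof. by apply/matrixP => i j; rewrite !(cmxE, mxE) rmorphMn. Qed.

Lemma cmx1 a : cmx (1%:M : 'M[R]_a) = 1%:M.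
Proof. by rewrite cmx_scalar. Qed.

Lemma cmx_mul a b c (M : 'M[R]_(a,b)) (N : 'M[R]_(b,c)) : cmx (M *m N) = cmx M *m cmx N.
Proof. by rewrite /cmx map_mxM. Qed.

Lemma cmx_block a1 a2 b1 b2 (M1 : 'M[R]_(a1,b1)) (M2 : 'M[R]_(a1,b2)) (M3 : 'M[R]_(a2,b1)) (M4 : 'M[R]_(a2,b2)) :
  cmx (block_mx M1 M2 M3 M4) = block_mx (cmx M1) (cmx M2) (cmx M3) (cmx M4).
Proof. by rewrite /cmx map_block_mx. Qed.

Lemma cmx_row a b1 b2 (M1 : 'M[R]_(a,b1)) (M2 : 'M[R]_(a,b2)) :
  cmx (row_mx M1 M2) = row_mx (cmx M1) (cmx M2).
Proof. by rewrite /cmx map_row_mx. Qed.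

Lemma cmx_col a1 a2 b (M1 : 'M[R]_(a1,b)) (M2 : 'M[R]_(a2,b)) :
  cmx (col_mx M1 M2) = col_mx (cmx M1) (cmx M2).
Proof. by rewrite /cmx map_col_mx. Qed.

Lemma cmx_tr a b (M : 'M[R]_(a,b)) : cmx M^T = (cmx M)^T.
Proof. by rewrite /cmx map_trmx. Qed.

Lemma cmx_inv a (M : 'M[R]_a) : cmx (invmx M) = invmx (cmx M).
Proof. by rewrite /cmx map_invmx. Qed.

End Cmx.

From mathcomp Require Import ring.
Section Main.
Variables (R : realType) (n p r1 r2 : nat) (A : 'M[R]_n) (B : 'M[R]_(n, p))
  (C1 : 'M[R]_(r1, n)) (C2 : 'M[R]_(r2, n)) (m mu rho : R) (s : R[i]).
Local Notation C := (R[i]).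
Let t := s - rho%:C.

Lemma Qblock (eps : R) : eps != 0 ->
  s%:M - cmx (Aepsrho r2 A B m mu eps rho) =
  block_mx (block_mx ((eps^-1)%:C *: ((eps%:C * t)%:M - cmx A)) (- ((eps^-1)%:C *: cmx B))
                      0 ((t + m%:C)%:M)) 0 0 ((t + mu%:C)%:M).
Proof.
move=> e0.
rewrite /Aepsrho /Aeps cmx_add !cmx_block !cmx0 !cmx_scale !cmx_opp !cmx_scalar.
rewrite (scalar_mx_block (n+p) r2 s) (scalar_mx_block (n+p) r2 rho%:C).
rewrite (scalar_mx_block n p s) (scalar_mx_block n p rho%:C).
rewrite !add_block_mx !opp_block_mx !add_block_mx.
have ec : eps%:C != 0 by rewrite fmorph_eq0.
rewrite !(addr0, add0r, subr0, sub0r, oppr0).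
congr block_mx; [congr block_mx|]; apply/matrixP => i j; rewrite !mxE ?fmorphV;
  case: (i == j); rewrite ?mulr1n ?mulr0n /t; try field.
all: by [|rewrite fmorph_eq0].
Qed.

Definition Nf (eps : R) : 'M[C]_n := (eps%:C * t)%:M - cmx A.
Definition gm := g_ m rho s.
Definition gu := g_ mu rho s.
Definition Phi (eps : R) : 'M[C]_((n + p) + r2) :=
  block_mx (block_mx (eps%:C *: invmx (Nf eps)) (gm *: (invmx (Nf eps) *m cmx B)) 0 gm%:M)
    0 0 gu%:M.

Lemma tgm : s != - (m - rho)%:C -> (t + m%:C) * gm = 1.
Proof.
move=> hs; rewrite /gm /g_ /t -addrA -rmorphN -rmorphD (addrC (- rho)) mulfV //.
by move: hs; apply: contra; rewrite addr_eq0 => /eqP ->.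
Qed.

Lemma tgu : s != - (mu - rho)%:C -> (t + mu%:C) * gu = 1.
Proof.
move=> hs; rewrite /gu /g_ /t -addrA -rmorphN -rmorphD (addrC (- rho)) mulfV //.
by move: hs; apply: contra; rewrite addr_eq0 => /eqP ->.
Qed.

Lemma Phi_inv (eps : R) : eps != 0 -> Nf eps \in unitmx ->
  s != - (m - rho)%:C -> s != - (mu - rho)%:C ->
  invmx (s%:M - cmx (Aepsrho r2 A B m mu eps rho)) = Phi eps.
Proof.
move=> e0 uN hm hu.
have ec : eps%:C != 0 by rewrite fmorph_eq0.
rewrite Qblock //.
set Q := block_mx _ _ _ _.
have QP : Q *m Phi eps = 1%:M.
  rewrite /Q /Phi -/(Nf eps) !mulmx_block !(mulmx0, mul0mx, addr0, add0r).
  rewrite (scalar_mx_block (n+p) r2 1) (scalar_mx_block n p 1).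
  congr block_mx; [congr block_mx | ].
  - by rewrite -scalemxAl -scalemxAr scalerA mulmxV // fmorphV mulVf // scale1r.
  - rewrite mulNmx mul_mx_scalar -scalemxAl -scalemxAr mulmxA mulmxV // mul1mx.
    by rewrite !scalerA mulrC subrr.
  - by rewrite -scalar_mxM tgm.
  - by rewrite -scalar_mxM tgu.
have [uQ _] := mulmx1_unit QP.
by rewrite -[RHS]mul1mx -(mulVmx uQ) -mulmxA QP mulmx1.
Qed.

Lemma cmxA_unit : hurwitz A -> cmx A \in unitmx.
Proof.
move=> hA; rewrite unitmxE unitfE; apply/negP => /det0P [v v0 vA].
have ev : eigenvalue (cmx A) 0 by apply/eigenvalueP; exists v => //; rewrite vA scale0r.
by have := hA 0 ev; rewrite ReE conjC0 addr0 mul0r ltxx.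
Qed.

Lemma invmx_uniqC k (M N : 'M[C]_k) : M *m N = 1%:M -> invmx M = N.
Proof.
move=> MN; have [uM _] := mulmx1_unit MN.
by rewrite -[RHS]mul1mx -(mulVmx uM) -mulmxA MN mulmx1.
Qed.

Definition Z0 := invmx (Nf 0) *m cmx B.

Lemma Nf0 : Nf 0 = - cmx A.
Proof. by rewrite /Nf rmorph0 mul0r (raddf0 (@scalar_mx _ n)) sub0r. Qed.

Lemma Z0E : hurwitz A -> Z0 = - (cmx (invmx A) *m cmx B).
Proof.
move=> hA; have uA := cmxA_unit hA.
rewrite /Z0 Nf0 (@invmx_uniqC _ _ (- cmx (invmx A))) ?mulNmx //.
by rewrite mulmxN opprK cmx_inv mulmxV.
Qed.

Lemma cmxPi r (Ci : 'M[R]_(r, n)) : hurwitz A -> cmx (Pi_u A B Ci) = cmx Ci *m Z0.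
Proof.
by move=> hA; rewrite Z0E // /Pi_u cmx_opp !cmx_mul cmx_inv mulmxN mulmxA.
Qed.

Definition Phi0 : 'M[C]_((n + p) + r2) :=
  block_mx (block_mx ((0:R)%:C *: invmx (Nf 0)) (gm *: (invmx (Nf 0) *m cmx B)) 0 gm%:M)
    0 0 gu%:M.

Definition J0 : 'M[C]_((n + p) + r2, p + r2) := block_mx (col_mx Z0 1%:M) 0 0 1%:M.
Definition D0 : 'M[C]_(p + r2) := block_mx gm%:M 0 0 gu%:M.
Definition K0 : 'M[C]_(p + r2, (n + p) + r2) := block_mx (row_mx 0 1%:M) 0 0 1%:M.

Lemma Phi0E : Phi0 = J0 *m D0 *m K0.
Proof.
rewrite /Phi0 /J0 /D0 /K0 rmorph0 scale0r -/Z0 !mulmx_block.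
rewrite !(mulmx0, mul0mx, mulmx1, mul1mx, addr0, add0r).
by rewrite mul_col_mx mul1mx mul_col_mx !mul_mx_row !mulmx0 !mulmx1 mul_mx_scalar.
Qed.

Lemma CJ : hurwitz A -> cmx (Cm p C1 C2 mu) *m J0 = block_mx (cmx (Pibar1u A B C1)) 0 (cmx (Pi2u A B C2)) ((mu%:C)%:M).
Proof.
move=> hA; rewrite /Cm /J0 /Pibar1u /Pi1u /Pi2u !cmx_block !cmx_col !cmx_row !cmx0 !cmx1 cmx_scalar.
rewrite !cmxPi // !mulmx_block !mul_col_mx !mul_row_col.
by rewrite !(mulmx0, mul0mx, mulmx1, mul1mx, addr0, add0r) col_mx0.
Qed.

Lemma KB : K0 *m cmx (Bm A B C1 C2 mu) =
  block_mx (- cmx (Pibar1u A B C1)^T) (- ((mu^-1)%:C *: cmx (Pi2u A B C2)^T)) 0 1%:M.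
Proof.
rewrite /K0 /Bm /Pibar1u !cmx_block !cmx_col !cmx_row !cmx0 !cmx_opp !cmx_scale !cmx_tr !cmx1.
rewrite !mulmx_block !mul_row_col.
rewrite !(mulmx0, mul0mx, mulmx1, mul1mx, addr0, add0r).
by rewrite cmx_col cmx1 tr_col_mx trmx1 opp_row_mx.
Qed.

Lemma Hrho_eq : hurwitz A ->
  cmx (Cm p C1 C2 mu) *m Phi0 *m cmx (Bm A B C1 C2 mu) = Hrho A B C1 C2 m mu rho s.
Proof.
move=> hA; rewrite Phi0E !mulmxA CJ // -!mulmxA KB.
by rewrite /Hrho /D0 /gm /gu !mulmxA.
Qed.

Lemma main_lim : hurwitz A -> s != - (m - rho)%:C -> s != - (mu - rho)%:C ->
  (fun eps : R => Gepsrho A B C1 C2 m mu eps rho s) @ (0 : R)^'+ --> Hrho A B C1 C2 m mu rho s.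
Proof.
move=> hA hm hu.
have uA := cmxA_unit hA.
have uN0 : Nf 0 \in unitmx.
  rewrite Nf0; have [] := @mulmx1_unit _ _ (- cmx A) (- invmx (cmx A)) => //.
  by rewrite mulmxN mulNmx opprK mulmxV.
have ce : (fun eps : R => eps%:C) @ (0:R)^'+ --> (0:R)%:C := cvg_at_right_filter (@cvg_realC R 0).
have hN : mxc (0:R)^'+ (fun eps => Nf eps) (Nf 0).
  rewrite /Nf; apply: mxc_add; last exact: mxc_cst.
  apply: mxc_scalarf; exact: (cvgM ce (cvg_cst t)).
have FF0 : Filter ((0:R)^'+) := at_right_proper_filter 0.
have hP : mxc (0:R)^'+ (fun eps => invmx (Nf eps)) (invmx (Nf 0)) := @mxc_inv R R (0:R)^'+ FF0 _ _ _ uN0 hN.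
have c_B : mxc (0:R)^'+ (fun _ => cmx B) (cmx B) by move=> i j; exact: cvg_cst.
have c_0 : mxc (0:R)^'+ (fun _ => 0 : 'M[C]_(p, n)) 0 by move=> i j; exact: cvg_cst.
have c_gm : mxc (0:R)^'+ (fun _ => gm%:M : 'M[C]_p) gm%:M by move=> i j; exact: cvg_cst.
have c_01 : mxc (0:R)^'+ (fun _ => 0 : 'M[C]_(n + p, r2)) 0 by move=> i j; exact: cvg_cst.
have c_02 : mxc (0:R)^'+ (fun _ => 0 : 'M[C]_(r2, n + p)) 0 by move=> i j; exact: cvg_cst.
have c_gu : mxc (0:R)^'+ (fun _ => gu%:M : 'M[C]_r2) gu%:M by move=> i j; exact: cvg_cst.
have c_C : mxc (0:R)^'+ (fun _ => cmx (Cm p C1 C2 mu)) (cmx (Cm p C1 C2 mu)) by move=> i j; exact: cvg_cst.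
have c_Bm : mxc (0:R)^'+ (fun _ => cmx (Bm A B C1 C2 mu)) (cmx (Bm A B C1 C2 mu)) by move=> i j; exact: cvg_cst.
have c_g : (fun _ : R => gm) @ (0:R)^'+ --> gm by exact: cvg_cst.
have h1 : mxc (0:R)^'+ (fun eps => eps%:C *: invmx (Nf eps)) ((0:R)%:C *: invmx (Nf 0)) :=
  mxc_scale (FF:=FF0) ce hP.
have h2 : mxc (0:R)^'+ (fun eps => invmx (Nf eps) *m cmx B) (invmx (Nf 0) *m cmx B) :=
  mxc_mul (FF:=FF0) hP c_B.
have h3 : mxc (0:R)^'+ (fun eps => gm *: (invmx (Nf eps) *m cmx B)) (gm *: (invmx (Nf 0) *m cmx B)) :=
  mxc_scale (FF:=FF0) c_g h2.
have h4 : mxc (0:R)^'+ (fun eps => block_mx (eps%:C *: invmx (Nf eps)) (gm *: (invmx (Nf eps) *m cmx B)) 0 gm%:M)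
   (block_mx ((0:R)%:C *: invmx (Nf 0)) (gm *: (invmx (Nf 0) *m cmx B)) 0 gm%:M) :=
  mxc_block h1 h3 c_0 c_gm.
have hPhi : mxc (0:R)^'+ (fun eps => Phi eps) Phi0 :=
  mxc_block h4 c_01 c_02 c_gu.
have h5 : mxc (0:R)^'+ (fun eps => cmx (Cm p C1 C2 mu) *m Phi eps) (cmx (Cm p C1 C2 mu) *m Phi0) :=
  mxc_mul (FF:=FF0) c_C hPhi.
have hG : mxc (0:R)^'+ (fun eps => cmx (Cm p C1 C2 mu) *m Phi eps *m cmx (Bm A B C1 C2 mu))
    (cmx (Cm p C1 C2 mu) *m Phi0 *m cmx (Bm A B C1 C2 mu)) :=
  mxc_mul (FF:=FF0) h5 c_Bm.
have hd : (fun eps => \det (Nf eps)) @ (0:R)^'+ --> \det (Nf 0) := cvg_det (FF:=FF0) hN.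
have dN0 : \det (Nf 0) != 0 by rewrite -unitfE -unitmxE.
have ev1 := @cvgr_neq0 _ _ _ (0:R)^'+ FF0 _ _ hd dN0.
have ev2 : \forall eps \near (0:R)^'+, 0 < eps := nbhs_right_gt 0.
have E : forall eps : R, \det (Nf eps) != 0 -> 0 < eps ->
    Gepsrho A B C1 C2 m mu eps rho s = cmx (Cm p C1 C2 mu) *m Phi eps *m cmx (Bm A B C1 C2 mu).
  move=> eps k1 k2; rewrite /Gepsrho Phi_inv //; first by rewrite gt_eqF.
have ev := @filterS2 _ (0:R)^'+ FF0 _ _ _ E ev1 ev2.
rewrite -Hrho_eq //.
apply: mxcvgP => i j.
apply: (@cvg_near_eqC _ _ _ _ _ (fun eps => (cmx (Cm p C1 C2 mu) *m Phi eps *m cmx (Bm A B C1 C2 mu)) i j)).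
  have E2 : forall eps, Gepsrho A B C1 C2 m mu eps rho s = cmx (Cm p C1 C2 mu) *m Phi eps *m cmx (Bm A B C1 C2 mu) ->
     Gepsrho A B C1 C2 m mu eps rho s i j = (cmx (Cm p C1 C2 mu) *m Phi eps *m cmx (Bm A B C1 C2 mu)) i j.
    by move=> eps ->.
  exact: (filterS E2 ev).
exact: hG i j.
Qed.

End Main.
Unset Implicit Arguments.
Set Strict Implicit.

Theorem lemma1 (R : realType) (n p r1 r2 : nat) (A : 'M[R]_n) (B : 'M[R]_(n, p))
  (C1 : 'M[R]_(r1, n)) (C2 : 'M[R]_(r2, n)) (m mu rho : R) :
  hurwitz A -> 0 < m -> 0 < mu -> 0 <= rho ->
  forall s : R[i], s != - (m - rho)%:C -> s != - (mu - rho)%:C ->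
  (fun eps : R => Gepsrho A B C1 C2 m mu eps rho s) @ (0 : R)^'+
    --> Hrho A B C1 C2 m mu rho s.
Proof.
move=> hA _ _ _ s hm hu.
exact: (@main_lim R n p r1 r2 A B C1 C2 m mu rho s hA hm hu).
Qed.
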